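(* In the setting of the context (QFSR scheme with $\kappa=1/3$, $\kappa_3=-2/3$, $\theta_2=2/3$), suppose the flux $f$ is a quadratic polynomial in $u$. Let $\mathcal{E}_j=(\Phi_{j+1/2}-\Phi_{j-1/2})/h$ evaluated on exact nodal values. Then as $h\to0$, with derivatives at $x_j$, $$\mathcal{E}_j=\frac{\partial f}{\partial x}+\left[\frac1{120}\frac{\partial f}{\partial u}\frac{\partial^5 u}{\partial x^5}-\frac{5}{216}\frac{\partial^2 f}{\partial u^2}\frac{\partial^2 u}{\partial x^2}\frac{\partial^3 u}{\partial x^3}\right]h^4+O(h^5),$$ where $f$ denotes $f(u(x))$ and $\partial f/\partial u$ is evaluated at $u(x_j)$.
   Context: Let $h>0$, uniform grid $x_i=ih$, $i\in\mathbb{Z}$. Let $u$ be a smooth real function of $x$, $u_i=u(x_i)$; let $f$ (flux) and $D$ (dissipation coefficient) be smooth real functions of one variable. Define successive central differences $(u_x)_i=(u_{i+1}-u_{i-1})/(2h)$, $(u_{xx})_i=((u_x)_{i+1}-(u_x)_{i-1})/(2h)$. For the face $i+1/2$ with $j=i$, $k=i+1$, let $T_j=\frac h4((u_x)_k-(u_x)_j)-\frac{h^2}{4}(u_{xx})_j$, $T_k=\frac h4((u_x)_k-(u_x)_j)-\frac{h^2}{4}(u_{xx})_k$, and reconstructed states (parameters $\kappa,\kappa_3$) $u_L=\kappa\frac{u_j+u_k}{2}+(1-\kappa)[u_j+\frac h2(u_x)_j]+\kappa_3T_j$, $u_R=\kappa\frac{u_j+u_k}{2}+(1-\kappa)[u_k-\frac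 h2(u_x)_k]+\kappa_3T_k$. With $\Delta_L=u_L-u_j$, $\Delta_R=u_R-u_k$ and parameter $\theta_2$, the reconstructed fluxes are $f_L=f(u_j)+f'(u_j)\Delta_L+\frac{\theta_2}{2}f''(u_j)\Delta_L^2$ and $f_R=f(u_k)+f'(u_k)\Delta_R+\frac{\theta_2}{2}f''(u_k)\Delta_R^2$. Numerical flux: $\Phi_{i+1/2}=\frac12(f_L+f_R)-\frac12D_{i+1/2}(u_R-u_L)$, with $D_{i+1/2}=\bar D(u_i,u_{i+1})$ for a smooth symmetric $\bar D$ with $\bar D(v,v)=D(v)$. *)

(* Defs.v *)
From Stdlib Require Import Reals ZArith.
From Coquelicot Require Import Coquelicot.
Open Scope R_scope.

Definition smooth1 (g : R -> R) : Prop := forall (n : nat) (x : R), ex_derive_n g n x.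

Fixpoint Ck2 (n : nat) (g : R -> R -> R) : Prop :=
  match n with
  | O => forall x y : R, continuous (fun p : R * R => g (fst p) (snd p)) (x, y)
  | S m =>
      (forall x y, ex_derive (fun t => g t y) x) /\
      (forall x y, ex_derive (fun t => g x t) y) /\
      Ck2 m (fun x y => Derive (fun t => g t y) x) /\
      Ck2 m (fun x y => Derive (fun t => g x t) y)
  end.

Definition smooth2 (g : R -> R -> R) : Prop := forall n, Ck2 n g.

Definition cdx (h : R) (U : Z -> R) (i : Z) : R :=
  (U (i + 1)%Z - U (i - 1)%Z) / (2 * h).

Section Scheme.
Variables (kappa kappa3 theta2 : R) (f : R -> R) (Dbar : R -> R -> R) (h : R) (U : Z -> R).

Definition ux (i : Z) : R := cdx h U i.
Definition uxx (i : Z) : R := cdx h ux i.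

(* Face i+1/2, with j = i, k = i+1. *)
Definition Tj (i : Z) : R := h / 4 * (ux (i + 1)%Z - ux i) - h ^ 2 / 4 * uxx i.
Definition Tk (i : Z) : R := h / 4 * (ux (i + 1)%Z - ux i) - h ^ 2 / 4 * uxx (i + 1)%Z.

Definition uL (i : Z) : R :=
  kappa * ((U i + U (i + 1)%Z) / 2) + (1 - kappa) * (U i + h / 2 * ux i) + kappa3 * Tj i.
Definition uR (i : Z) : R :=
  kappa * ((U i + U (i + 1)%Z) / 2) + (1 - kappa) * (U (i + 1)%Z - h / 2 * ux (i + 1)%Z)
  + kappa3 * Tk i.

Definition fL (i : Z) : R :=
  let dL := uL i - U i in
  f (U i) + Derive f (U i) * dL + theta2 / 2 * Derive_n f 2 (U i) * dL ^ 2.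
Definition fR (i : Z) : R :=
  let dR := uR i - U (i + 1)%Z in
  f (U (i + 1)%Z) + Derive f (U (i + 1)%Z) * dR
  + theta2 / 2 * Derive_n f 2 (U (i + 1)%Z) * dR ^ 2.

(* Numerical flux Phi_{i+1/2}. *)
Definition Phi (i : Z) : R :=
  (fL i + fR i) / 2 - Dbar (U i) (U (i + 1)%Z) / 2 * (uR i - uL i).

Definition Eflux (j : Z) : R := (Phi j - Phi (j - 1)%Z) / h.
End Scheme.

(* Main.v *)
From Stdlib Require Import Reals ZArith List Lra.
From Coquelicot Require Import Coquelicot.
Open Scope R_scope.
Require Import Defs.

Inductive pe := PC (r : R) | PV (n : nat) | PA (p q : pe) | PM (p q : pe).
Fixpoint pev (env : list R) (p : pe) : R :=
  match p with PC r => r | PV n => nth n env 0 | PA p q => pev env p + pev env q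
  | PM p q => pev env p * pev env q end.
Fixpoint pab (env : list R) (p : pe) : R :=
  match p with PC r => Rabs r | PV n => nth n env 0 | PA p q => pab env p + pab env q
  | PM p q => pab env p * pab env q end.

Lemma pab_ok env benv : (forall n, Rabs (nth n env 0) <= nth n benv 0) ->
  forall p, Rabs (pev env p) <= pab benv p.
Proof.
  intros H p; induction p; simpl.
  - lra.
  - apply H.
  - eapply Rle_trans; [apply Rabs_triang|lra].
  - rewrite Rabs_mult. apply Rmult_le_compat; auto using Rabs_pos.
Qed.
Definition Qpe : pe := PA (PA (PA (PA (PA (PA (PA (PA (PA (PA (PA (PA (PA (PA (PA (PA (PA (PA (PA (PA (PA (PA (PA (PA (PA (PA (PA (PA (PA (PA (PA (PA (PA (PA (PA (PA (PA (PA (PA (PA (PA (PA (PA (PA (PA (PA (PA (PA (PA (PA (PA (PA (PA (PA (PA (PA (PA (PA (PA (PA (PA (PA (PA (PA (PA (PA (PA (PA (PA (PA (PA (PA (PA (PA (PA (PA (PA (PA (PA (PA (PA (PA (PA (PA (PA (PA (PA (PA (PA (PA (PA (PA (PA (PM (PM (PC (-1/48)) (PV 12)) (PV 15)) (PM (PM (PC (1/48)) (PV 12)) (PV 13))) (PM (PM (PC (1/8)) (PV 11)) (PV 15))) (PM (PM (PC (-1/6)) (PV 11)) (PV 13))) (PM (PM (PC (-5/16)) (PV 10)) (PV 15))) (PM (PM (PC (37/48)) (PV 10)) (PV 13))) (PM (PM (PC (-5/16)) (PV 9)) (PV 15))) (PM (PM (PC (-37/48)) (PV 9)) (PV 13)))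 (PM (PM (PC (1/8)) (PV 8)) (PV 15))) (PM (PM (PC (1/6)) (PV 8)) (PV 13))) (PM (PM (PC (-1/48)) (PV 7)) (PV 15))) (PM (PM (PC (-1/48)) (PV 7)) (PV 13))) (PM (PM (PM (PC (-1/24)) (PV 2)) (PV 6)) (PV 16))) (PM (PM (PM (PC (1/24)) (PV 1)) (PV 12)) (PV 14))) (PM (PM (PM (PC (-1/3)) (PV 1)) (PV 11)) (PV 14))) (PM (PM (PM (PC (37/24)) (PV 1)) (PV 10)) (PV 14))) (PM (PM (PM (PC (-37/24)) (PV 1)) (PV 9)) (PV 14))) (PM (PM (PM (PC (1/3)) (PV 1)) (PV 8)) (PV 14))) (PM (PM (PM (PC (-1/24)) (PV 1)) (PV 7)) (PV 14))) (PM (PM (PM (PM (PC (-5/1296)) (PV 0)) (PV 4)) (PV 5)) (PV 14))) (PM (PM (PM (PM (PC (1/144)) (PV 0)) (PV 3)) (PV 6)) (PV 14))) (PM (PM (PM (PM (PC (1/36)) (PV 0)) (PV 2)) (PV 12)) (PV 14))) (PM (PM (PM (PM (PC (-1/24)) (PV 0)) (PV 2)) (PV 11)) (PV 16))) (PM (PM (PM (PM (PC (-1/6)) (PV 0)) (PV 2)) (PV 11)) (PV 14))) (PM (PM (PM (PM (PC (5/24)) (PV 0)) (PV 2)) (PV 10)) (PV 16))) (PM (PM (PM (PM (PC (5/12)) (PV 0)) (PV 2)) (PV 10)) (PV 14))) (PM (PM (PM (PM (PC (5/12)) (PV 0)) (PV 2)) (PV 9)) (PV 16))) (PM (PM (PM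 (PM (PC (5/12)) (PV 0)) (PV 2)) (PV 9)) (PV 14))) (PM (PM (PM (PM (PC (-5/24)) (PV 0)) (PV 2)) (PV 8)) (PV 16))) (PM (PM (PM (PM (PC (-1/6)) (PV 0)) (PV 2)) (PV 8)) (PV 14))) (PM (PM (PM (PM (PC (1/24)) (PV 0)) (PV 2)) (PV 7)) (PV 16))) (PM (PM (PM (PM (PC (1/36)) (PV 0)) (PV 2)) (PV 7)) (PV 14))) (PM (PM (PM (PM (PM (PC (-1/144)) (PV 0)) (PV 0)) (PV 4)) (PV 6)) (PV 16))) (PM (PM (PM (PM (PM (PC (1/108)) (PV 0)) (PV 0)) (PV 3)) (PV 12)) (PV 14))) (PM (PM (PM (PM (PM (PC (-13/216)) (PV 0)) (PV 0)) (PV 3)) (PV 11)) (PV 14))) (PM (PM (PM (PM (PM (PC (5/54)) (PV 0)) (PV 0)) (PV 3)) (PV 10)) (PV 14))) (PM (PM (PM (PM (PM (PC (-5/54)) (PV 0)) (PV 0)) (PV 3)) (PV 9)) (PV 14))) (PM (PM (PM (PM (PM (PC (13/216)) (PV 0)) (PV 0)) (PV 3)) (PV 8)) (PV 14))) (PM (PM (PM (PM (PM (PC (-1/108)) (PV 0)) (PV 0)) (PV 3)) (PV 7)) (PV 14))) (PM (PM (PM (PM (PM (PM (PC (1/1728)) (PV 0)) (PV 0)) (PV 0)) (PV 5)) (PV 6)) (PV 14))) (PM (PM (PM (PM (PM (PM (PC (1/432)) (PV 0)) (PV 0)) (PV 0)) (PV 4)) (PV 12)) (PV 14))) (PM (PM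 (PM (PM (PM (PM (PC (-1/144)) (PV 0)) (PV 0)) (PV 0)) (PV 4)) (PV 11)) (PV 16))) (PM (PM (PM (PM (PM (PM (PC (-1/72)) (PV 0)) (PV 0)) (PV 0)) (PV 4)) (PV 11)) (PV 14))) (PM (PM (PM (PM (PM (PM (PC (5/144)) (PV 0)) (PV 0)) (PV 0)) (PV 4)) (PV 10)) (PV 16))) (PM (PM (PM (PM (PM (PM (PC (-5/432)) (PV 0)) (PV 0)) (PV 0)) (PV 4)) (PV 10)) (PV 14))) (PM (PM (PM (PM (PM (PM (PC (5/72)) (PV 0)) (PV 0)) (PV 0)) (PV 4)) (PV 9)) (PV 16))) (PM (PM (PM (PM (PM (PM (PC (-5/432)) (PV 0)) (PV 0)) (PV 0)) (PV 4)) (PV 9)) (PV 14))) (PM (PM (PM (PM (PM (PM (PC (-5/144)) (PV 0)) (PV 0)) (PV 0)) (PV 4)) (PV 8)) (PV 16))) (PM (PM (PM (PM (PM (PM (PC (-1/72)) (PV 0)) (PV 0)) (PV 0)) (PV 4)) (PV 8)) (PV 14))) (PM (PM (PM (PM (PM (PM (PC (1/144)) (PV 0)) (PV 0)) (PV 0)) (PV 4)) (PV 7)) (PV 16))) (PM (PM (PM (PM (PM (PM (PC (1/432)) (PV 0)) (PV 0)) (PV 0)) (PV 4)) (PV 7)) (PV 14))) (PM (PM (PM (PM (PM (PM (PM (PC (-1/2880)) (PV 0)) (PV 0)) (PV 0)) (PV 0)) (PV 6)) (PV 6)) (PV 16))) (PM (PM (PM (PM (PM (PM (PM (PC (1/1296))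 (PV 0)) (PV 0)) (PV 0)) (PV 0)) (PV 5)) (PV 12)) (PV 14))) (PM (PM (PM (PM (PM (PM (PM (PC (-13/2592)) (PV 0)) (PV 0)) (PV 0)) (PV 0)) (PV 5)) (PV 11)) (PV 14))) (PM (PM (PM (PM (PM (PM (PM (PC (5/648)) (PV 0)) (PV 0)) (PV 0)) (PV 0)) (PV 5)) (PV 10)) (PV 14))) (PM (PM (PM (PM (PM (PM (PM (PC (-5/648)) (PV 0)) (PV 0)) (PV 0)) (PV 0)) (PV 5)) (PV 9)) (PV 14))) (PM (PM (PM (PM (PM (PM (PM (PC (13/2592)) (PV 0)) (PV 0)) (PV 0)) (PV 0)) (PV 5)) (PV 8)) (PV 14))) (PM (PM (PM (PM (PM (PM (PM (PC (-1/1296)) (PV 0)) (PV 0)) (PV 0)) (PV 0)) (PV 5)) (PV 7)) (PV 14))) (PM (PM (PM (PM (PM (PM (PM (PM (PC (7/8640)) (PV 0)) (PV 0)) (PV 0)) (PV 0)) (PV 0)) (PV 6)) (PV 12)) (PV 14))) (PM (PM (PM (PM (PM (PM (PM (PM (PC (-1/2880)) (PV 0)) (PV 0)) (PV 0)) (PV 0)) (PV 0)) (PV 6)) (PV 11)) (PV 16))) (PM (PM (PM (PM (PM (PM (PM (PM (PC (-7/1440)) (PV 0)) (PV 0)) (PV 0)) (PV 0)) (PV 0)) (PV 6)) (PV 11)) (PV 14))) (PM (PM (PM (PM (PM (PM (PM (PM (PC (-11/576)) (PV 0)) (PV 0)) (PV 0)) (PV 0)) (PV 0)) (PV 6)) (PV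 10)) (PV 16))) (PM (PM (PM (PM (PM (PM (PM (PM (PC (11/576)) (PV 0)) (PV 0)) (PV 0)) (PV 0)) (PV 0)) (PV 6)) (PV 10)) (PV 14))) (PM (PM (PM (PM (PM (PM (PM (PM (PC (7/288)) (PV 0)) (PV 0)) (PV 0)) (PV 0)) (PV 0)) (PV 6)) (PV 9)) (PV 16))) (PM (PM (PM (PM (PM (PM (PM (PM (PC (11/576)) (PV 0)) (PV 0)) (PV 0)) (PV 0)) (PV 0)) (PV 6)) (PV 9)) (PV 14))) (PM (PM (PM (PM (PM (PM (PM (PM (PC (-1/576)) (PV 0)) (PV 0)) (PV 0)) (PV 0)) (PV 0)) (PV 6)) (PV 8)) (PV 16))) (PM (PM (PM (PM (PM (PM (PM (PM (PC (-7/1440)) (PV 0)) (PV 0)) (PV 0)) (PV 0)) (PV 0)) (PV 6)) (PV 8)) (PV 14))) (PM (PM (PM (PM (PM (PM (PM (PM (PC (1/2880)) (PV 0)) (PV 0)) (PV 0)) (PV 0)) (PV 0)) (PV 6)) (PV 7)) (PV 16))) (PM (PM (PM (PM (PM (PM (PM (PM (PC (7/8640)) (PV 0)) (PV 0)) (PV 0)) (PV 0)) (PV 0)) (PV 6)) (PV 7)) (PV 14))) (PM (PM (PM (PM (PM (PM (PM (PM (PM (PC (1/1728)) (PV 0)) (PV 0)) (PV 0)) (PV 0)) (PV 0)) (PV 0)) (PV 12)) (PV 12)) (PV 14))) (PM (PM (PM (PM (PM (PM (PM (PM (PM (PC (-1/144)) (PV 0)) (PV 0)) (PV 0)) (PV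 0)) (PV 0)) (PV 0)) (PV 11)) (PV 12)) (PV 14))) (PM (PM (PM (PM (PM (PM (PM (PM (PM (PC (1/48)) (PV 0)) (PV 0)) (PV 0)) (PV 0)) (PV 0)) (PV 0)) (PV 11)) (PV 11)) (PV 14))) (PM (PM (PM (PM (PM (PM (PM (PM (PM (PC (1/27)) (PV 0)) (PV 0)) (PV 0)) (PV 0)) (PV 0)) (PV 0)) (PV 10)) (PV 12)) (PV 14))) (PM (PM (PM (PM (PM (PM (PM (PM (PM (PC (-1/48)) (PV 0)) (PV 0)) (PV 0)) (PV 0)) (PV 0)) (PV 0)) (PV 10)) (PV 11)) (PV 16))) (PM (PM (PM (PM (PM (PM (PM (PM (PM (PC (-49/216)) (PV 0)) (PV 0)) (PV 0)) (PV 0)) (PV 0)) (PV 0)) (PV 10)) (PV 11)) (PV 14))) (PM (PM (PM (PM (PM (PM (PM (PM (PM (PC (5/48)) (PV 0)) (PV 0)) (PV 0)) (PV 0)) (PV 0)) (PV 0)) (PV 10)) (PV 10)) (PV 16))) (PM (PM (PM (PM (PM (PM (PM (PM (PM (PC (655/1728)) (PV 0)) (PV 0)) (PV 0)) (PV 0)) (PV 0)) (PV 0)) (PV 10)) (PV 10)) (PV 14))) (PM (PM (PM (PM (PM (PM (PM (PM (PM (PC (-1/864)) (PV 0)) (PV 0)) (PV 0)) (PV 0)) (PV 0)) (PV 0)) (PV 9)) (PV 12)) (PV 14))) (PM (PM (PM (PM (PM (PM (PM (PM (PM (PC (1/48)) (PV 0)) (PV 0)) (PV 0)) (PV 0)) (PV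 0)) (PV 0)) (PV 9)) (PV 11)) (PV 16))) (PM (PM (PM (PM (PM (PM (PM (PM (PM (PC (1/432)) (PV 0)) (PV 0)) (PV 0)) (PV 0)) (PV 0)) (PV 0)) (PV 9)) (PV 11)) (PV 14))) (PM (PM (PM (PM (PM (PM (PM (PM (PM (PC (5/48)) (PV 0)) (PV 0)) (PV 0)) (PV 0)) (PV 0)) (PV 0)) (PV 9)) (PV 10)) (PV 16))) (PM (PM (PM (PM (PM (PM (PM (PM (PM (PC (-5/24)) (PV 0)) (PV 0)) (PV 0)) (PV 0)) (PV 0)) (PV 0)) (PV 9)) (PV 9)) (PV 16))) (PM (PM (PM (PM (PM (PM (PM (PM (PM (PC (-655/1728)) (PV 0)) (PV 0)) (PV 0)) (PV 0)) (PV 0)) (PV 0)) (PV 9)) (PV 9)) (PV 14))) (PM (PM (PM (PM (PM (PM (PM (PM (PM (PC (-5/48)) (PV 0)) (PV 0)) (PV 0)) (PV 0)) (PV 0)) (PV 0)) (PV 8)) (PV 10)) (PV 16))) (PM (PM (PM (PM (PM (PM (PM (PM (PM (PC (-1/432)) (PV 0)) (PV 0)) (PV 0)) (PV 0)) (PV 0)) (PV 0)) (PV 8)) (PV 10)) (PV 14))) (PM (PM (PM (PM (PM (PM (PM (PM (PM (PC (5/48)) (PV 0)) (PV 0)) (PV 0)) (PV 0)) (PV 0)) (PV 0)) (PV 8)) (PV 9)) (PV 16))) (PM (PM (PM (PM (PM (PM (PM (PM (PM (PC (49/216)) (PV 0)) (PV 0)) (PV 0)) (PV 0)) (PV 0))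 (PV 0)) (PV 8)) (PV 9)) (PV 14))) (PM (PM (PM (PM (PM (PM (PM (PM (PM (PC (-1/48)) (PV 0)) (PV 0)) (PV 0)) (PV 0)) (PV 0)) (PV 0)) (PV 8)) (PV 8)) (PV 14))) (PM (PM (PM (PM (PM (PM (PM (PM (PM (PC (1/48)) (PV 0)) (PV 0)) (PV 0)) (PV 0)) (PV 0)) (PV 0)) (PV 7)) (PV 10)) (PV 16))) (PM (PM (PM (PM (PM (PM (PM (PM (PM (PC (1/864)) (PV 0)) (PV 0)) (PV 0)) (PV 0)) (PV 0)) (PV 0)) (PV 7)) (PV 10)) (PV 14))) (PM (PM (PM (PM (PM (PM (PM (PM (PM (PC (-1/48)) (PV 0)) (PV 0)) (PV 0)) (PV 0)) (PV 0)) (PV 0)) (PV 7)) (PV 9)) (PV 16))) (PM (PM (PM (PM (PM (PM (PM (PM (PM (PC (-1/27)) (PV 0)) (PV 0)) (PV 0)) (PV 0)) (PV 0)) (PV 0)) (PV 7)) (PV 9)) (PV 14))) (PM (PM (PM (PM (PM (PM (PM (PM (PM (PC (1/144)) (PV 0)) (PV 0)) (PV 0)) (PV 0)) (PV 0)) (PV 0)) (PV 7)) (PV 8)) (PV 14))) (PM (PM (PM (PM (PM (PM (PM (PM (PM (PC (-1/1728)) (PV 0)) (PV 0)) (PV 0)) (PV 0)) (PV 0)) (PV 0)) (PV 7)) (PV 7)) (PV 14)).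
Definition P1pe : pe := PA (PA (PA (PA (PA (PM (PM (PC (1)) (PV 0)) (PV 2)) (PM (PM (PM (PC (1/2)) (PV 0)) (PV 0)) (PV 3))) (PM (PM (PM (PM (PC (1/6)) (PV 0)) (PV 0)) (PV 0)) (PV 4))) (PM (PM (PM (PM (PM (PC (1/24)) (PV 0)) (PV 0)) (PV 0)) (PV 0)) (PV 5))) (PM (PM (PM (PM (PM (PM (PC (1/120)) (PV 0)) (PV 0)) (PV 0)) (PV 0)) (PV 0)) (PV 6))) (PM (PM (PM (PM (PM (PM (PM (PC (1)) (PV 0)) (PV 0)) (PV 0)) (PV 0)) (PV 0)) (PV 0)) (PV 10)).
Definition Pm1pe : pe := PA (PA (PA (PA (PA (PM (PM (PC (-1)) (PV 0)) (PV 2)) (PM (PM (PM (PC (1/2)) (PV 0)) (PV 0)) (PV 3))) (PM (PM (PM (PM (PC (-1/6)) (PV 0)) (PV 0)) (PV 0)) (PV 4))) (PM (PM (PM (PM (PM (PC (1/24)) (PV 0)) (PV 0)) (PV 0)) (PV 0)) (PV 5))) (PM (PM (PM (PM (PM (PM (PC (-1/120)) (PV 0)) (PV 0)) (PV 0)) (PV 0)) (PV 0)) (PV 6))) (PM (PM (PM (PM (PM (PM (PM (PC (1)) (PV 0)) (PV 0)) (PV 0)) (PV 0)) (PV 0)) (PV 0)) (PV 9)).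

Definition tay (h t u0 u1 u2 u3 u4 u5 e : R) :=
  u0 + (t*h)*u1 + (t*h)^2/2*u2 + (t*h)^3/6*u3 + (t*h)^4/24*u4 + (t*h)^5/120*u5 + h^6*e.

Lemma alg (f : R -> R) (Dbar : R -> R -> R) (U : Z -> R)
  (h u0 u1 u2 u3 u4 u5 em3 em2 em1 e1 e2 e3 a b c B G : R) :
  h <> 0 ->
  (forall v, Derive f v = b + 2*c*v) -> (forall v, Derive_n f 2 v = 2*c) ->
  (forall v, f v = a + b*v + c*v^2) ->
  U 0%Z = u0 ->
  U 1%Z = tay h 1 u0 u1 u2 u3 u4 u5 e1 ->
  U 2%Z = tay h 2 u0 u1 u2 u3 u4 u5 e2 ->
  U 3%Z = tay h 3 u0 u1 u2 u3 u4 u5 e3 ->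
  U (-1)%Z = tay h (-1) u0 u1 u2 u3 u4 u5 em1 ->
  U (-2)%Z = tay h (-2) u0 u1 u2 u3 u4 u5 em2 ->
  U (-3)%Z = tay h (-3) u0 u1 u2 u3 u4 u5 em3 ->
  Dbar (U 0%Z) (U 1%Z) = B ->
  Dbar (U (-1)%Z) (U 0%Z) = B - G * (U 1%Z - U (-1)%Z) ->
  Eflux (1/3) (-2/3) (2/3) f Dbar h U 0 - (b + 2*c*u0)*u1
   - (1/120*(b+2*c*u0)*u5 - 5/216*(2*c)*u2*u3)*h^4
  = h^5 * pev (h::u0::u1::u2::u3::u4::u5::em3::em2::em1::e1::e2::e3::b::c::B::G::nil) Qpe.
Proof.
  intros Hh Hd1 Hd2 Hf H0 H1 H2 H3 Hm1 Hm2 Hm3 HB HBm.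
  unfold Eflux, Phi, fL, fR, uL, uR, Tj, Tk, uxx, ux, cdx.
  simpl Z.add; simpl Z.sub.
  rewrite HB, HBm.
  rewrite !Hd1, !Hd2, !Hf.
  rewrite H0, H1, H2, H3, Hm1, Hm2, Hm3.
  unfold tay, Qpe; simpl pev.
  field. exact Hh.
Qed.

Lemma cont_of_ex (g : R -> R) (c : R) : ex_derive g c -> continuity_pt g c.
Proof. intro H. apply continuity_pt_filterlim. exact (ex_derive_continuous g c H). Qed.

Lemma bound_on (g : R -> R) lo hi : lo <= hi -> (forall c, lo <= c <= hi -> ex_derive g c) ->
  exists M, forall c, lo <= c <= hi -> Rabs (g c) <= M.
Proof.
  intros Hle Hd.
  assert (Hc : forall c, lo <= c <= hi -> continuity_pt g c) by (intros; apply cont_of_ex; auto).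
  destruct (continuity_ab_maj g lo hi Hle Hc) as [Mx [HM _]].
  destruct (continuity_ab_min g lo hi Hle Hc) as [mx [Hm _]].
  exists (Rabs (g Mx) + Rabs (g mx)). intros c Hc'.
  specialize (HM c Hc'). specialize (Hm c Hc').
  pose proof (Rle_abs (g Mx)). pose proof (Rle_abs (- g mx)). rewrite Rabs_Ropp in H0.
  pose proof (Rabs_pos (g Mx)). pose proof (Rabs_pos (g mx)).
  apply Rabs_le; lra.
Qed.

Lemma fact_INR k : INR (fact k) = IZR (Z.of_nat (fact k)).
Proof. apply INR_IZR_INZ. Qed.

Definition T5 g y0 d := g y0 + d*Derive_n g 1 y0 + d^2/2*Derive_n g 2 y0 + d^3/6*Derive_n g 3 y0
  + d^4/24*Derive_n g 4 y0 + d^5/120*Derive_n g 5 y0.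

Lemma taylor_pos g y0 d : smooth1 g -> 0 < d ->
  exists z, y0 <= z <= y0 + d /\ g (y0 + d) = T5 g y0 d + d^6/720 * Derive_n g 6 z.
Proof.
  intros Hg Hd.
  destruct (Taylor_Lagrange g 5 y0 (y0+d)) as [z [Hz E]].
  - lra.
  - intros; apply Hg.
  - exists z. split; [lra|]. rewrite E. cbn [sum_f_R0].
    rewrite !fact_INR. unfold T5. simpl Z.of_nat.
    replace (y0 + d - y0) with d by ring. idtac.
    change (Derive_n g 0 y0) with (g y0). field.
Qed.

Lemma taylor6 g y0 d : smooth1 g ->
  exists z, y0 - Rabs d <= z <= y0 + Rabs d /\ g (y0 + d) = T5 g y0 d + d^6/720 * Derive_n g 6 z.
Proof.
  intros Hg. destruct (total_order_T d 0) as [[Hd|Hd]|Hd].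
  - set (v := fun y => g (-1 * y)).
    assert (Hv : smooth1 v).
    { intros n t. unfold v. apply ex_derive_n_comp_scal. apply filter_forall. intros; apply Hg. }
    assert (HD : forall n t, Derive_n v n t = (-1)^n * Derive_n g n (-1 * t)).
    { intros n t. unfold v. apply Derive_n_comp_scal. apply filter_forall. intros; apply Hg. }
    destruct (taylor_pos v (-y0) (-d) Hv) as [z [Hz E]]; [lra|].
    exists (-1 * z). rewrite Rabs_left by lra. split; [lra|].
    replace (g (y0 + d)) with (v (-y0 + -d)) by (unfold v; f_equal; ring).
    rewrite E. unfold T5. rewrite !HD. unfold v.
    replace (-1 * -y0) with y0 by ring. field.
  - subst d. exists y0. rewrite Rabs_R0. split; [lra|]. unfold T5. rewrite Rplus_0_r. field.
  - destruct (taylor_pos g y0 d Hg Hd) as [z [Hz E]]. exists z.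
    rewrite Rabs_right by lra. split; [lra|]. exact E.
Qed.

Lemma df1 (f : R -> R) a b c : (forall v, f v = a + b*v + c*v^2) ->
  forall v, Derive f v = b + 2*c*v.
Proof.
  intros Hf v. rewrite (Derive_ext f (fun v => a + b*v + c*v^2)) by auto.
  apply is_derive_unique. auto_derive; auto. ring.
Qed.

Lemma df2 (f : R -> R) a b c : (forall v, f v = a + b*v + c*v^2) ->
  forall v, Derive_n f 2 v = 2*c.
Proof.
  intros Hf v. change (Derive (fun y => Derive f y) v = 2*c).
  rewrite (Derive_ext (fun y => Derive f y) (fun v => b + 2*c*v)) by (apply df1 with a; auto).
  apply is_derive_unique. auto_derive; auto. ring.
Qed.

Lemma dcomp (f u : R -> R) a b c x : (forall v, f v = a + b*v + c*v^2) -> smooth1 u ->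
  Derive (fun y => f (u y)) x = (b + 2*c*u x) * Derive_n u 1 x.
Proof.
  intros Hf Hu.
  rewrite (Derive_ext (fun y => f (u y)) (fun y => a + b*u y + c*(u y)^2)) by auto.
  assert (Hx : ex_derive u x) by exact (Hu 1%nat x).
  apply is_derive_unique. auto_derive; auto. change (Derive_n u 1 x) with (Derive u x). change (Derive (fun x0 => u x0) x) with (Derive u x). ring.
Qed.

Lemma pab_nonneg' benv p : (forall n, 0 <= nth n benv 0) -> 0 <= pab benv p.
Proof. intro H. induction p; simpl; auto using Rabs_pos, Rplus_le_le_0_compat, Rmult_le_pos. Qed.

Ltac bnd := simpl nth; first [apply Rle_refl | assumption | (rewrite Rabs_R0; lra)
  | (rewrite Rabs_right; lra) | apply Rabs_pos | lra].
Ltac allbnd := let n := fresh "n" in intros n; repeat match goal with | v := _ : list R |- _ => subst v end;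
  do 17 (destruct n as [|n]; [bnd|]); destruct n; simpl nth; rewrite ?Rabs_R0; lra.

Lemma pab_nonneg env benv p : (forall n, Rabs (nth n env 0) <= nth n benv 0) -> 0 <= pab benv p.
Proof. intro H. eapply Rle_trans; [apply Rabs_pos|apply (pab_ok env benv H)]. Qed.

Theorem mainTheorem7 :
  forall (u f D : R -> R) (Dbar : R -> R -> R) (a b c : R),
    (forall v, f v = a + b * v + c * v ^ 2) ->
    smooth1 u -> smooth1 D -> smooth2 Dbar ->
    (forall v w, Dbar v w = Dbar w v) ->
    (forall v, Dbar v v = D v) ->
    forall x : R,
      exists C delta : R, 0 < delta /\
        forall h : R, 0 < h < delta ->
          Rabs (Eflux (1/3) (-2/3) (2/3) f Dbar h
                      (fun i : Z => u (x + IZR i * h)) 0%Z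
                - Derive (fun y => f (u y)) x
                - (1/120 * Derive f (u x) * Derive_n u 5 x
                   - 5/216 * Derive_n f 2 (u x) * Derive_n u 2 x * Derive_n u 3 x) * h ^ 4)
          <= C * h ^ 5.
Proof.
  intros u f D Dbar a b c Hf Hu HD HDb Hsym Hdiag x.
  destruct (bound_on (Derive_n u 6) (x-3) (x+3)) as [M6 HM6].
  { lra. }
  { intros t _. exact (Hu 7%nat t). }
  assert (HM6p : 0 <= M6) by (eapply Rle_trans; [apply Rabs_pos|apply (HM6 x); lra]).
  set (K := 729/720 * M6).
  assert (HK : 0 <= K) by (unfold K; lra).
  assert (HT : forall t h, 0 < h < 1 -> -3 <= t <= 3 -> exists e, Rabs e <= K /\
     u (x + t*h) = tay h t (u x) (Derive_n u 1 x) (Derive_n u 2 x) (Derive_n u 3 x)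
                     (Derive_n u 4 x) (Derive_n u 5 x) e).
  { intros t h Hh Ht.
    destruct (taylor6 u x (t*h) Hu) as [z [Hz E]].
    assert (Hth : Rabs (t*h) <= 3).
    { rewrite Rabs_mult, (Rabs_right h) by lra.
      assert (Rabs t <= 3) by (apply Rabs_le; lra).
      pose proof (Rabs_pos t). nra. }
    exists (t^6/720 * Derive_n u 6 z). split.
    - rewrite Rabs_mult. unfold Rdiv. rewrite Rabs_mult, <- RPow_abs.
      rewrite (Rabs_right (/720)) by lra.
      assert (Rabs t <= 3) by (apply Rabs_le; lra).
      assert (Rabs t ^ 6 <= 3 ^ 6) by (apply pow_incr; split; [apply Rabs_pos|lra]).
      assert (Rabs (Derive_n u 6 z) <= M6) by (apply HM6; lra).
      pose proof (pow_le (Rabs t) 6 (Rabs_pos t)).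
      unfold K.
      apply Rle_trans with (3^6 * /720 * M6); [|lra].
      apply Rmult_le_compat; try apply Rabs_pos; try lra.
      all: try (apply Rmult_le_pos; lra).
    - rewrite E. unfold T5, tay. change (Derive_n u 0 x) with (u x). field. }
  set (benv0 := 1 :: Rabs (u x) :: Rabs (Derive_n u 1 x) :: Rabs (Derive_n u 2 x)
       :: Rabs (Derive_n u 3 x) :: Rabs (Derive_n u 4 x) :: Rabs (Derive_n u 5 x)
       :: K :: K :: K :: K :: K :: K :: 0 :: 0 :: 0 :: 0 :: nil).
  set (L := pab benv0 P1pe + pab benv0 Pm1pe).

  assert (HL0 : 0 <= L).
  { unfold L. assert (forall n, 0 <= nth n benv0 0) by allbnd.
    pose proof (pab_nonneg' benv0 P1pe H). pose proof (pab_nonneg' benv0 Pm1pe H). lra. }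
  assert (HLb : forall h e1 em1, 0 < h < 1 -> Rabs e1 <= K -> Rabs em1 <= K ->
     Rabs (tay h 1 (u x) (Derive_n u 1 x) (Derive_n u 2 x) (Derive_n u 3 x)
                     (Derive_n u 4 x) (Derive_n u 5 x) e1 - u x) <= L /\
     Rabs (tay h (-1) (u x) (Derive_n u 1 x) (Derive_n u 2 x) (Derive_n u 3 x)
                     (Derive_n u 4 x) (Derive_n u 5 x) em1 - u x) <= L).
  { intros h e1 em1 Hh He1 Hem1.
    set (env0 := h :: u x :: Derive_n u 1 x :: Derive_n u 2 x :: Derive_n u 3 x
       :: Derive_n u 4 x :: Derive_n u 5 x :: 0 :: 0 :: em1 :: e1 :: 0 :: 0 :: 0 :: 0 :: 0 :: 0 :: nil).
    assert (Hb : forall n, Rabs (nth n env0 0) <= nth n benv0 0) by allbnd.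
    pose proof (pab_ok env0 benv0 Hb P1pe). pose proof (pab_ok env0 benv0 Hb Pm1pe).
    pose proof (pab_nonneg' benv0 P1pe ltac:(allbnd)).
    pose proof (pab_nonneg' benv0 Pm1pe ltac:(allbnd)).
    replace (tay h 1 (u x) (Derive_n u 1 x) (Derive_n u 2 x) (Derive_n u 3 x)
                     (Derive_n u 4 x) (Derive_n u 5 x) e1 - u x) with (pev env0 P1pe)
      by (unfold tay, P1pe, env0; cbn [pev nth]; field).
    replace (tay h (-1) (u x) (Derive_n u 1 x) (Derive_n u 2 x) (Derive_n u 3 x)
                     (Derive_n u 4 x) (Derive_n u 5 x) em1 - u x) with (pev env0 Pm1pe)
      by (unfold tay, Pm1pe, env0; cbn [pev nth]; field).
    unfold L. split; lra. }
  destruct (HDb 1%nat) as [_ [HD2 _]].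
  destruct (HDb 2%nat) as [_ [_ [_ [_ [HD22 _]]]]].
  destruct (bound_on (fun t => Dbar (u x) t) (u x - L) (u x + L)) as [MB HMB].
  { lra. } { intros; apply HD2. }
  destruct (bound_on (fun t => Derive (fun s => Dbar (u x) s) t) (u x - L) (u x + L)) as [MG HMG].
  { lra. } { intros; apply HD22. }
  set (benv := 1 :: Rabs (u x) :: Rabs (Derive_n u 1 x) :: Rabs (Derive_n u 2 x)
       :: Rabs (Derive_n u 3 x) :: Rabs (Derive_n u 4 x) :: Rabs (Derive_n u 5 x)
       :: K :: K :: K :: K :: K :: K :: Rabs b :: Rabs c :: MB :: MG :: nil).
  exists (pab benv Qpe), 1. split; [lra|]. intros h Hh.
  set (U := fun i : Z => u (x + IZR i * h)).
  destruct (HT 1 h Hh ltac:(lra)) as [e1 [He1 E1]].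
  destruct (HT 2 h Hh ltac:(lra)) as [e2 [He2 E2]].
  destruct (HT 3 h Hh ltac:(lra)) as [e3 [He3 E3]].
  destruct (HT (-1) h Hh ltac:(lra)) as [em1 [Hem1 Em1]].
  destruct (HT (-2) h Hh ltac:(lra)) as [em2 [Hem2 Em2]].
  destruct (HT (-3) h Hh ltac:(lra)) as [em3 [Hem3 Em3]].
  assert (H0 : U 0%Z = u x) by (unfold U; rewrite Rmult_0_l, Rplus_0_r; reflexivity).
  destruct (HLb h e1 em1 Hh He1 Hem1) as [L1 Lm1].
  rewrite <- E1 in L1. rewrite <- Em1 in Lm1.
  change (u (x + 1 * h)) with (U 1%Z) in L1.
  change (u (x + -1 * h)) with (U (-1)%Z) in Lm1.
  destruct (MVT_gen (fun t => Dbar (u x) t) (U (-1)%Z) (U 1%Z) (Derive (fun t => Dbar (u x) t)))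
    as [xi [Hxi HMVT]].
  { intros; apply Derive_correct; apply HD2. }
  { intros; apply cont_of_ex; apply HD2. }
  assert (Hxi' : u x - L <= xi <= u x + L).
  { pose proof (Rle_abs (U 1%Z - u x)). pose proof (Rle_abs (-(U 1%Z - u x))).
    pose proof (Rle_abs (U (-1)%Z - u x)). pose proof (Rle_abs (-(U (-1)%Z - u x))).
    rewrite Rabs_Ropp in *.
    revert Hxi. unfold Rmin, Rmax. destruct (Rle_dec (U (-1)%Z) (U 1%Z)); lra. }
  assert (HU1 : u x - L <= U 1%Z <= u x + L).
  { pose proof (Rle_abs (U 1%Z - u x)). pose proof (Rle_abs (-(U 1%Z - u x))).
    rewrite Rabs_Ropp in *. lra. }
  pose proof (HMB _ HU1) as HBb. pose proof (HMG _ Hxi') as HGb. cbv beta in HBb, HGb, HMVT.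
  rewrite (dcomp f u a b c x Hf Hu), (df1 f a b c Hf), (df2 f a b c Hf).
  rewrite (alg f Dbar U h (u x) (Derive_n u 1 x) (Derive_n u 2 x) (Derive_n u 3 x)
              (Derive_n u 4 x) (Derive_n u 5 x) em3 em2 em1 e1 e2 e3 a b c
              (Dbar (u x) (U 1%Z)) (Derive (fun t => Dbar (u x) t) xi)).
  2: lra.
  2: apply (df1 f a b c Hf).
  2: apply (df2 f a b c Hf).
  2: exact Hf.
  2: exact H0.
  2: exact E1.
  2: exact E2.
  2: exact E3.
  2: exact Em1.
  2: exact Em2.
  2: exact Em3.
  2: rewrite H0; reflexivity.
  2: rewrite H0, Hsym; lra.
  rewrite Rabs_mult, (Rabs_right (h^5)) by (apply Rle_ge, pow_le; lra).
  rewrite Rmult_comm. apply Rmult_le_compat_r; [apply pow_le; lra|].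
  apply pab_ok. allbnd.
Qed.
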